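(* For every countable ordinal $\alpha$: $\mathfrak{D}_{\alpha+1} = \mathfrak{D}(\overline{\mathfrak{D}_\alpha})$, and more generally, for every countable ordinal $\alpha \geq 1$, $\mathfrak{D}_{\alpha} = \mathfrak{D}\left(\overline{\bigcup_{\lambda < \alpha} \mathfrak{D}_\lambda}\right)$.
   Context: All sets are subsets of Cantor space $\{0,1\}^\mathbb{N}$. For a countable ordinal $\alpha$, let $\mathrm{par}(\alpha)=0$ if $\alpha=\beta+2n$ for some limit ordinal $\beta$ (with $0$ counted as a limit) and some $n\in\mathbb{N}$, and $\mathrm{par}(\alpha)=1$ otherwise. The class $\mathfrak{D}_\alpha$ (level $\alpha$ of the Hausdorff difference hierarchy) consists of all sets $D$ for which there is a family $(U_\lambda)_{\lambda<\alpha}$ of open sets with: $x\in D \iff \mathrm{par}(\inf\{\beta \mid x\in U_\beta\})\neq \mathrm{par}(\alpha)$, where $\inf\emptyset=\alpha$. (So $\mathfrak{D}_0=\{\emptyset\}$, $\mathfrak{D}_1$ = open sets.) For a class $\Gamma$ of sets, $\overline{\Gamma}=\{U^C \mid U\in\Gamma\}$, and $\mathfrak{D}(\Gamma)$ is the class of all sets $\bigcup_{i\in I} v_iU_i$ where $I\subseteq\mathbb{N}$, each $v_i\in\{0,1\}^*$, each $U_i\in\Gamma$, the words $v_i$ are pairwise prefix-incomparable, and $vU=\{vp\mid p\in U\}$. *)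

(* Defs.v *)
From Stdlib Require Import Arith List.
Import ListNotations.
Set Implicit Arguments.

Definition Cantor := nat -> bool.

Definition open_set (U : Cantor -> Prop) : Prop :=
  forall x, U x -> exists n, forall y, (forall k, k < n -> y k = x k) -> U y.

Definition prepend (v : list bool) (p : Cantor) : Cantor :=
  fun n => if n <? length v then nth n v false else p (n - length v).

Definition is_prefix (u v : list bool) : Prop := exists w, v = u ++ w.

Definition prefix_incomparable (u v : list bool) : Prop :=
  ~ is_prefix u v /\ ~ is_prefix v u.

(** Countable ordinals are represented by countable well-orders (T, lt):
    the elements of T are the ordinals beta < alpha, alpha being the order type. *)
Definition countable_wellorder (T : Type) (lt : T -> T -> Prop) : Prop :=
  (forall a, ~ lt a a) /\
  (forall a b c, lt a b -> lt b c -> lt a c) /\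
  (forall a b, lt a b \/ a = b \/ lt b a) /\
  well_founded lt /\
  (exists f : T -> nat, forall a b, f a = f b -> a = b).

(** The ordinals <= alpha: option T, with None standing for alpha itself. *)
Definition ltopt (T : Type) (lt : T -> T -> Prop) (a b : option T) : Prop :=
  match a, b with
  | Some a', Some b' => lt a' b'
  | Some _, None => True
  | None, _ => False
  end.

Definition immpred (P : Type) (R : P -> P -> Prop) (a b : P) : Prop :=
  R a b /\ ~ (exists c, R a c /\ R c b).

Fixpoint stepsdown (P : Type) (R : P -> P -> Prop) (k : nat) (b c : P) : Prop :=
  match k with
  | 0 => c = b
  | S k' => exists d, immpred R d b /\ stepsdown R k' d c
  end.

(** par(b) = 0  iff  b = lambda + 2n with lambda limit or 0
    (lambda has no immediate predecessor). *)
Definition par_even (P : Type) (R : P -> P -> Prop) (b : P) : Prop :=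
  exists n c, stepsdown R (2 * n) b c /\ ~ (exists d, immpred R d c).

(** m = inf { beta | x in U_beta }, with inf of the empty set = alpha (None). *)
Definition is_inf (T : Type) (lt : T -> T -> Prop) (U : T -> Cantor -> Prop)
    (x : Cantor) (m : option T) : Prop :=
  match m with
  | Some b => U b x /\ forall c, U c x -> ~ lt c b
  | None => forall c, ~ U c x
  end.

Definition Dclass (T : Type) (lt : T -> T -> Prop) (D : Cantor -> Prop) : Prop :=
  exists U : T -> Cantor -> Prop,
    (forall t, open_set (U t)) /\
    forall x, D x <->
      exists m, is_inf lt U x m /\
        ~ (par_even (ltopt lt) m <-> par_even (ltopt lt) None).

Definition coclass (G : (Cantor -> Prop) -> Prop) (D : Cantor -> Prop) : Prop :=
  exists U, G U /\ forall x, D x <-> ~ U x.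

Definition Dgen (G : (Cantor -> Prop) -> Prop) (D : Cantor -> Prop) : Prop :=
  exists (I : nat -> Prop) (v : nat -> list bool) (U : nat -> Cantor -> Prop),
    (forall i, I i -> G (U i)) /\
    (forall i j, I i -> I j -> i <> j -> prefix_incomparable (v i) (v j)) /\
    forall x, D x <-> exists i p, I i /\ U i p /\ forall n, x n = prepend (v i) p n.

(** Initial segment {w | w < l}: the ordinal l < alpha. *)
Definition seg (T : Type) (lt : T -> T -> Prop) (l : T) : Type := { w : T | lt w l }.
Definition seglt (T : Type) (lt : T -> T -> Prop) (l : T) (a b : seg lt l) : Prop :=
  lt (proj1_sig a) (proj1_sig b).

(* Main.v *)
Require Import Defs.
From Stdlib Require Import Arith List.
From Stdlib Require Import Lia PArith Wellfounded Classical FunctionalExtensionality ProofIrrelevance ClassicalEpsilon.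
Import ListNotations.
Set Implicit Arguments.


Definition WO (P : Type) (R : P -> P -> Prop) : Prop :=
  (forall a, ~ R a a) /\ (forall a b c, R a b -> R b c -> R a c) /\
  (forall a b, R a b \/ a = b \/ R b a) /\ well_founded R.

Definition lim (P:Type) (R : P->P->Prop) c := ~ exists d, immpred R d c.

Lemma immpred_uniq P R (HW : @WO P R) a a' b : immpred R a b -> immpred R a' b -> a = a'.
Proof.
  destruct HW as (Hi & Ht & Htot & Hwf).
  intros [H1 H2] [H1' H2'].
  destruct (Htot a a') as [h|[h|h]]; auto.
  - exfalso. apply H2. exists a'. auto.
  - exfalso. apply H2'. exists a. auto.
Qed.

Lemma steps_uniq P R (HW : @WO P R) k : forall b c k' c', stepsdown R k b c -> stepsdown R k' b c' ->
  lim R c -> lim R c' -> k = k'.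
Proof.
  induction k as [|k IH]; intros b c k' c' H H' L L'; destruct k' as [|k']; simpl in *.
  - reflexivity.
  - subst c. destruct H' as (d & Hd & _). exfalso; apply L; eauto.
  - subst c'. destruct H as (d & Hd & _). exfalso; apply L'; eauto.
  - destruct H as (d & Hd & H). destruct H' as (d' & Hd' & H').
    pose proof (immpred_uniq HW Hd Hd'). subst d'.
    f_equal. eapply IH; eauto.
Qed.

Lemma steps_exists P R (HW : @WO P R) : forall b, exists k c, stepsdown R k b c /\ lim R c.
Proof.
  destruct HW as (Hi & Ht & Htot & Hwf).
  intro b. induction (Hwf b) as [b _ IH].
  destruct (classic (exists d, immpred R d b)) as [[d Hd]|Hn].
  - destruct (IH d (proj1 Hd)) as (k & c & Hs & Hl).
    exists (S k), c. split; [exists d; auto | auto].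
  - exists 0, b. split; [reflexivity | exact Hn].
Qed.

Lemma par_succ P R (HW : @WO P R) a b : immpred R a b -> (par_even R b <-> ~ par_even R a).
Proof.
  intro Hab. split.
  - intros (n & c & Hs & Hl) (m & c' & Hs' & Hl').
    destruct n as [|n].
    + simpl in Hs. subst c. apply Hl. eauto.
    + replace (2 * S n) with (S (2*n+1)) in Hs by lia.
      destruct Hs as (d & Hd & Hs). pose proof (immpred_uniq HW Hd Hab). subst d.
      assert (2*n+1 = 2*m) by (eapply steps_uniq; eauto). lia.
  - intro Hn. destruct (steps_exists HW a) as (k & c & Hs & Hl).
    destruct (Nat.Even_or_Odd k) as [[n Hk]|[n Hk]].
    + exfalso. apply Hn. exists n, c. subst k. auto.
    + exists (S n), c. split; auto. replace (2 * S n) with (S k) by lia. exists a. auto.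
Qed.

Section Emb.
Variables (P Q : Type) (RP : P -> P -> Prop) (RQ : Q -> Q -> Prop) (g : P -> Q).
Hypothesis Hmono : forall a b, RP a b <-> RQ (g a) (g b).
Hypothesis Hdown : forall q b, RQ q (g b) -> exists a, q = g a.

Lemma emb_immpred a b : immpred RP a b <-> immpred RQ (g a) (g b).
Proof.
  unfold immpred. split; intros [H1 H2]; split.
  - apply Hmono; auto.
  - intros (c & Hc1 & Hc2). destruct (Hdown Hc2) as [c' ->]. apply H2. exists c'. rewrite !Hmono. auto.
  - apply Hmono; auto.
  - intros (c & Hc1 & Hc2). apply H2. exists (g c). rewrite <- !Hmono. auto.
Qed.

Lemma emb_lim c : lim RP c <-> lim RQ (g c).
Proof.
  unfold lim. split; intros H [d Hd].
  - destruct (Hdown (proj1 Hd)) as [d' ->]. apply H. exists d'. apply emb_immpred; auto.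
  - apply H. exists (g d). apply emb_immpred; auto.
Qed.

Lemma emb_steps k : forall b c, stepsdown RP k b c -> stepsdown RQ k (g b) (g c).
Proof. induction k; simpl; intros b c H.
  - subst; auto.
  - destruct H as (d & Hd & H). exists (g d). split; [apply emb_immpred|]; auto. Qed.

Lemma emb_steps_back k : forall b q, stepsdown RQ k (g b) q -> exists c, q = g c /\ stepsdown RP k b c.
Proof. induction k; simpl; intros b q H.
 - exists b; auto.
 - destruct H as (d & Hd & H). destruct (Hdown (proj1 Hd)) as [d' ->].
   destruct (IHk _ _ H) as (c & -> & Hc). exists c. split; auto. exists d'. split; auto. apply emb_immpred; auto.
Qed.

Lemma emb_par b : par_even RP b <-> par_even RQ (g b).
Proof.
  unfold par_even. split.
  - intros (n & c & Hs & Hl). exists n, (g c). split. apply emb_steps; auto. apply (emb_lim c); auto.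
  - intros (n & q & Hs & Hl). destruct (emb_steps_back _ _ _ Hs) as (c & -> & Hc). exists n, c. split; auto. apply emb_lim; auto.
Qed.
End Emb.

Lemma WO_opt (T:Type) (lt: T->T->Prop) : WO lt -> WO (ltopt lt).
Proof.
  intros (Hi & Ht & Htot & Hwf). split; [|split; [|split]].
  - intros [a|]; simpl; auto.
  - intros [a|] [b|] [c|]; simpl; intros H1 H2; try contradiction; auto. exact (Ht _ _ _ H1 H2).
  - intros [a|] [b|]; simpl; auto. destruct (Htot a b) as [h|[h|h]]; [left|right;left;congruence|right;right]; auto.
  - assert (HS : forall a, Acc (ltopt lt) (Some a)).
    { intro a. induction (Hwf a) as [a _ IH]. constructor. intros [y|] Hy; simpl in Hy; [apply IH; auto | contradiction]. }
    intros [a|]; auto. constructor. intros [y|] Hy; simpl in Hy; [auto|contradiction].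
Qed.

Lemma WO_seg T lt l : WO lt -> WO (@seglt T lt l).
Proof.
  intros (Hi & Ht & Htot & Hwf). unfold seglt. split; [|split; [|split]].
  - intros a; apply Hi.
  - intros a b c; apply Ht.
  - intros [a pa] [b pb]; simpl. destruct (Htot a b) as [h|[h|h]]; auto. right; left. subst. f_equal. apply proof_irrelevance.
  - apply (wf_inverse_image _ _ lt (@proj1_sig T _)) ; auto.
Qed.

Lemma wf_min P R (HW : @WO P R) (Q : P -> Prop) : (exists a, Q a) -> exists a, Q a /\ forall b, Q b -> ~ R b a.
Proof.
  destruct HW as (_&_&_&Hwf). intros [a Ha]. induction (Hwf a) as [a _ IH].
  destruct (classic (exists b, Q b /\ R b a)) as [(b&Hb&Hr)|Hn].
  - eapply IH; eauto.
  - exists a. split; auto. intros b Hb Hr. apply Hn; eauto.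
Qed.

Lemma inf_exists P R (HW : @WO P R) U x : exists m, is_inf R U x m.
Proof.
  destruct (classic (exists c, U c x)) as [H|H].
  - destruct (wf_min HW (fun c => U c x) H) as (a & Ha & Hm). exists (Some a). simpl; auto.
  - exists None. simpl. intros c Hc; apply H; eauto.
Qed.

Lemma inf_uniq P R (HW : @WO P R) U x m m' : is_inf R U x m -> is_inf R U x m' -> m = m'.
Proof.
  destruct HW as (Hi&_&Htot&_).
  destruct m as [a|], m' as [b|]; simpl; intros H H'.
  - destruct H as [Ha Hma], H' as [Hb Hmb]. destruct (Htot a b) as [h|[h|h]];
      [exfalso; exact (Hmb a Ha h)| subst; auto | exfalso; exact (Hma b Hb h)].
  - exfalso; eapply H'; apply (proj1 H).
  - exfalso; eapply H; apply (proj1 H').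
  - auto.
Qed.

Lemma cond_at P R (HW : @WO P R) U x m :
  is_inf R U x m ->
  ((exists m', is_inf R U x m' /\ ~ (par_even (ltopt R) m' <-> par_even (ltopt R) None)) <->
   ~ (par_even (ltopt R) m <-> par_even (ltopt R) None)).
Proof.
  intro H. split.
  - intros (m' & H' & Hp). rewrite (inf_uniq HW _ _ _ _ H H'). auto.
  - intro Hp. eauto.
Qed.

Lemma is_inf_ext P R (U U' : P -> Cantor -> Prop) x y m :
  (forall t, U t x <-> U' t y) -> (is_inf R U x m <-> is_inf R U' y m).
Proof. intro H. destruct m as [b|]; simpl.
  - split; intros [h1 h2]; split; [apply H; exact h1| |apply H; exact h1|];
      intros c hc; apply h2; apply H; exact hc.
  - split; intros h c hc; apply (h c); apply H; exact hc. Qed.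


Definition tl (v : list bool) (x : Cantor) : Cantor := fun n => x (n + length v).

Lemma prep_lt v p k : k < length v -> prepend v p k = nth k v false.
Proof. intro H. unfold prepend. apply Nat.ltb_lt in H. rewrite H. auto. Qed.
Lemma prep_ge v p k : length v <= k -> prepend v p k = p (k - length v).
Proof. intro H. unfold prepend. destruct (Nat.ltb_spec k (length v)); [lia|auto]. Qed.
Lemma tl_prep v p : tl v (prepend v p) = p.
Proof. extensionality n. unfold tl. rewrite prep_ge by lia. f_equal; lia. Qed.
Lemma prep_tl v x : (forall k, k < length v -> x k = nth k v false) -> prepend v (tl v x) = x.
Proof. intro H. extensionality k. destruct (Nat.lt_ge_cases k (length v)).
 - rewrite prep_lt by auto. symmetry; auto.
 - rewrite prep_ge by auto. unfold tl. f_equal; lia. Qed.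

Lemma prefix_of_nth (v w : list bool) : length v <= length w ->
  (forall k, k < length v -> nth k v false = nth k w false) -> is_prefix v w.
Proof.
  intros Hl Hn. exists (skipn (length v) w).
  rewrite <- (firstn_skipn (length v) w) at 1. f_equal.
  apply nth_ext with false false.
  - rewrite length_firstn; lia.
  - intros k Hk. rewrite length_firstn in Hk. rewrite nth_firstn.
    destruct (Nat.ltb_spec k (length v)); [|lia]. symmetry; apply Hn; lia.
Qed.

Lemma incomp_disj v w p q : prefix_incomparable v w -> prepend v p = prepend w q -> False.
Proof.
  intros [H1 H2] He.
  assert (Hn : forall k, k < length v -> k < length w -> nth k v false = nth k w false).
  { intros k a b. rewrite <- (prep_lt v p a), <- (prep_lt w q b), He. auto. }
  destruct (Nat.le_ge_cases (length v) (length w)) as [h|h].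
  - apply H1. apply prefix_of_nth; auto. intros k Hk; apply Hn; lia.
  - apply H2. apply prefix_of_nth; auto. intros k Hk; symmetry; apply Hn; lia.
Qed.

Lemma open_restr U w : open_set U -> open_set (fun p => U (prepend w p)).
Proof.
  intros HU p Hp. destruct (HU _ Hp) as [n Hn]. exists n. intros y Hy. apply Hn.
  intros k Hk. destruct (Nat.lt_ge_cases k (length w)).
  - rewrite !prep_lt; auto.
  - rewrite !prep_ge by auto. apply Hy. lia.
Qed.

Section Glue.
Variables (P : Type) (I : nat -> Prop) (v : nat -> list bool)
  (Hinc : forall i j, I i -> I j -> i <> j -> prefix_incomparable (v i) (v j))
  (F : nat -> P -> Cantor -> Prop).
Definition glue t x := exists i p, I i /\ F i t p /\ x = prepend (v i) p.
Lemma glue_open : (forall i t, I i -> open_set (F i t)) -> forall t, open_set (glue t).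
Proof.
  intros HF t x (i & p & Hi & Hp & ->). destruct (HF i t Hi p Hp) as [n Hn].
  exists (n + length (v i)). intros y Hy. exists i, (tl (v i) y). split; [auto|split].
  - apply Hn. intros k Hk. unfold tl. rewrite Hy by lia. rewrite prep_ge by lia. f_equal; lia.
  - symmetry. apply prep_tl. intros k Hk. rewrite Hy by lia. apply prep_lt; auto.
Qed.
Lemma glue_at i p t : I i -> (glue t (prepend (v i) p) <-> F i t p).
Proof.
  intro Hi. split.
  - intros (j & q & Hj & Hq & He). destruct (Nat.eq_dec i j) as [<-|Hne].
    + rewrite <- (tl_prep (v i) p), He, tl_prep. auto.
    + exfalso. exact (incomp_disj (Hinc Hi Hj Hne) He).
  - intro H. exists i, p. auto.
Qed.
Lemma glue_out x t : ~ (exists i p, I i /\ x = prepend (v i) p) -> ~ glue t x.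
Proof. intros H (i & p & Hi & _ & He). apply H; eauto. Qed.
End Glue.

Lemma Dgen_at (I : nat -> Prop) v (U : nat -> Cantor -> Prop) (D : Cantor -> Prop)
  (Hinc : forall i j, I i -> I j -> i <> j -> prefix_incomparable (v i) (v j))
  (HD : forall x, D x <-> exists i p, I i /\ U i p /\ forall n, x n = prepend (v i) p n) :
  (forall i p, I i -> (D (prepend (v i) p) <-> U i p)) /\
  (forall x, ~ (exists i p, I i /\ x = prepend (v i) p) -> ~ D x).
Proof.
  split.
  - intros i p Hi. rewrite HD. split.
    + intros (j & q & Hj & Hq & He). assert (He' : prepend (v i) p = prepend (v j) q) by (extensionality n; auto).
      destruct (Nat.eq_dec i j) as [<-|Hne].
      * rewrite <- (tl_prep (v i) p), He', tl_prep. auto.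
      * exfalso. exact (incomp_disj (Hinc i j Hi Hj Hne) He').
    + intro H. exists i, p. auto.
  - intros x Hn Hx. apply HD in Hx. destruct Hx as (i & p & Hi & _ & He). apply Hn. exists i, p. split; auto.
    extensionality n; auto.
Qed.

Fixpoint l2p (w : list bool) : positive :=
  match w with [] => xH | true :: w => xI (l2p w) | false :: w => xO (l2p w) end.
Fixpoint p2l (p : positive) : list bool :=
  match p with xH => [] | xI p => true :: p2l p | xO p => false :: p2l p end.
Lemma p2l_l2p w : p2l (l2p w) = w.
Proof. induction w as [|[|] w IH]; simpl; congruence. Qed.
Lemma l2p_p2l p : l2p (p2l p) = p.
Proof. induction p; simpl; congruence. Qed.
Definition dec (n : nat) := p2l (Pos.of_succ_nat n).
Definition enc (w : list bool) := Nat.pred (Pos.to_nat (l2p w)).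
Lemma dec_enc w : dec (enc w) = w.
Proof.
  unfold dec, enc. rewrite (SuccNat2Pos.inv (Nat.pred (Pos.to_nat (l2p w))) (l2p w)).
  - apply p2l_l2p.
  - pose proof (Pos2Nat.is_pos (l2p w)). lia.
Qed.
Lemma dec_inj i j : dec i = dec j -> i = j.
Proof.
  unfold dec. intro H. apply (f_equal l2p) in H. rewrite !l2p_p2l in H.
  rewrite <- (SuccNat2Pos.pred_id i), <- (SuccNat2Pos.pred_id j), H. auto.
Qed.

Definition pre (x : Cantor) k := map x (seq 0 k).
Lemma pre_length x k : length (pre x k) = k.
Proof. unfold pre. rewrite length_map, length_seq. auto. Qed.
Lemma pre_nth x k n : n < k -> nth n (pre x k) false = x n.
Proof. intro H. unfold pre. rewrite nth_indep with (d' := x 0) by (rewrite length_map, length_seq; auto).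
  rewrite map_nth, seq_nth; auto. Qed.
Lemma pre_prefix x k w : is_prefix w (pre x k) -> w = pre x (length w).
Proof.
  intros [u Hu]. assert (Hl : length w <= k) by (rewrite <- (pre_length x k), Hu, length_app; lia).
  apply nth_ext with false false. rewrite pre_length; auto.
  intros n Hn. rewrite pre_nth by auto. rewrite <- (pre_nth x (k:=k)) by lia. rewrite Hu, app_nth1; auto.
Qed.

Lemma nat_min (Q : nat -> Prop) : (exists n, Q n) -> exists n, Q n /\ forall m, m < n -> ~ Q m.
Proof.
  intros [n Hn]. induction n as [n IH] using (well_founded_induction lt_wf).
  destruct (classic (exists m, m < n /\ Q m)) as [(m&Hm&Q')|H]; [eapply IH; eauto|].
  exists n; split; auto. intros m a b; apply H; eauto.
Qed.

Section Decomp.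
Variables (P : Type) (U : P -> Cantor -> Prop) (HU : forall b, open_set (U b)).
Definition Sw w := exists b, forall p, U b (prepend w p).
Definition Mw w := Sw w /\ forall w', is_prefix w' w -> w' <> w -> ~ Sw w'.
Lemma Dgen_from (G : (Cantor -> Prop) -> Prop) (D : Cantor -> Prop) :
  (forall x, D x -> exists b, U b x) ->
  (forall w, Sw w -> G (fun p => D (prepend w p))) -> Dgen G D.
Proof.
  intros HD HG. exists (fun i => Mw (dec i)), dec, (fun i p => D (prepend (dec i) p)).
  split; [|split].
  - intros i [Hs _]. apply HG; auto.
  - intros i j [Si Mi] [Sj Mj] Hne. split; intro Hp.
    + apply (Mj (dec i)); auto. intro He. apply Hne. apply dec_inj; auto.
    + apply (Mi (dec j)); auto. intro He. apply Hne. apply dec_inj; auto.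
  - intro x. split.
    + intro Hx. destruct (HD x Hx) as [b Hb]. destruct (HU Hb) as [n Hn].
      assert (Hex : exists k, Sw (pre x k)).
      { exists n. exists b. intro p. apply Hn. intros k Hk.
        rewrite prep_lt by (rewrite pre_length; auto). apply pre_nth; auto. }
      destruct (nat_min _ Hex) as (k & Hk & Hmin).
      assert (Hx' : prepend (pre x k) (tl (pre x k) x) = x).
      { apply prep_tl. intros m Hm. rewrite pre_length in Hm. rewrite pre_nth; auto. }
      exists (enc (pre x k)), (tl (pre x k) x). rewrite dec_enc.
      split; [split|split].
      * exact Hk.
      * intros w' Hw' Hne HS. pose proof (pre_prefix _ _ Hw') as Heq.
        assert (length w' <= k).
        { destruct Hw' as [u Hu]. rewrite <- (pre_length x k), Hu, length_app. lia. }
        destruct (Nat.eq_dec (length w') k) as [E|E].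
        -- apply Hne. rewrite Heq, E. auto.
        -- rewrite Heq in HS. apply (Hmin (length w')); auto. lia.
      * rewrite Hx'. auto.
      * intro m. rewrite Hx'. auto.
    + intros (i & p & Hi & Hp & He). replace x with (prepend (dec i) p); auto. extensionality m; auto.
Qed.
End Decomp.


Lemma WO_cw T (lt : T -> T -> Prop) : countable_wellorder lt -> WO lt.
Proof. intros (a & b & c & d & _). repeat (split; auto). Qed.

Lemma par_Some P (R : P -> P -> Prop) b : par_even R b <-> par_even (ltopt R) (Some b).
Proof.
  apply (emb_par R (ltopt R) (@Some P)).
  - intros a c; simpl; tauto.
  - intros [q|] c H; simpl in H; [eauto|contradiction].
Qed.

Lemma immpred_Some P (R : P -> P -> Prop) a b : immpred R a b <-> immpred (ltopt R) (Some a) (Some b).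
Proof.
  apply (emb_immpred R (ltopt R) (@Some P)).
  - intros x c; simpl; tauto.
  - intros [q|] c H; simpl in H; [eauto|contradiction].
Qed.

Lemma top_succ P (R : P -> P -> Prop) (HW : WO R) :
  par_even (ltopt (ltopt R)) None <-> ~ par_even (ltopt R) None.
Proof.
  rewrite (par_succ (WO_opt (WO_opt HW)) (a := Some None) (b := None)).
  - rewrite <- par_Some. tauto.
  - split; simpl; auto. intros ([c|] & h1 & h2); simpl in *; auto.
Qed.

Definition hl T (lt : T -> T -> Prop) l (m : option (seg lt l)) : option T :=
  match m with Some s => Some (proj1_sig s) | None => Some l end.

Lemma par_hl T (lt : T -> T -> Prop) (HW : WO lt) l m :
  par_even (ltopt (@seglt T lt l)) m <-> par_even (ltopt lt) (hl m).
Proof.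
  destruct HW as (Hi & Ht & Htot & Hwf).
  apply (emb_par (ltopt (@seglt T lt l)) (ltopt lt) (@hl T lt l)).
  - intros [[a pa]|] [[b pb]|]; unfold seglt; simpl; split; intro h; try contradiction; auto;
      exfalso; [apply (Hi b)|apply (Hi l)]; eauto.
  - intros [q|] [[b pb]|] H; simpl in H; try contradiction.
    + exists (Some (exist _ q (Ht _ _ _ H pb))). reflexivity.
    + exists (Some (exist _ q H)). reflexivity.
Qed.

Section WOT.
Variables (T : Type) (lt : T -> T -> Prop) (HW : WO lt).
Notation ev := (par_even (ltopt lt)).

Lemma irr a : ~ lt a a. Proof. apply (proj1 HW). Qed.
Arguments irr : clear implicits.
Lemma trn a b c : lt a b -> lt b c -> lt a c. Proof. apply (proj1 (proj2 HW)). Qed.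
Lemma tot a b : lt a b \/ a = b \/ lt b a. Proof. apply (proj1 (proj2 (proj2 HW))). Qed.

Lemma succ_of a b : lt a b -> exists c, immpred lt a c.
Proof.
  intro h. destruct (wf_min HW (fun c => lt a c) (ex_intro _ b h)) as (c & Hc & Hm).
  exists c. split; auto. intros (d & h1 & h2). exact (Hm d h1 h2).
Qed.

Lemma par_succT a c : immpred lt a c -> (ev (Some c) <-> ~ ev (Some a)).
Proof. intro H. apply (par_succ (WO_opt HW)). apply -> immpred_Some. exact H. Qed.

Lemma succ_top a : (ev (Some a) <-> ev None) -> exists c, immpred lt a c.
Proof.
  intro H. destruct (classic (exists b, lt a b)) as [[b h]|Hn].
  - eapply succ_of; eauto.
  - exfalso. assert (Hp : immpred (ltopt lt) (Some a) None).
    { split; simpl; auto. intros ([c|] & h1 & h2); simpl in *; eauto. }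
    pose proof (par_succ (WO_opt HW) Hp). tauto.
Qed.

Lemma succ_mono a t a' t' : immpred lt a t -> immpred lt a' t' -> ~ lt a' a -> ~ lt t' t.
Proof.
  intros [H1 H2] [H1' H2'] Hna Htt.
  destruct (tot a a') as [h|[h|h]]; [|subst a'|contradiction].
  - apply H2. exists a'. split; auto. eapply trn; eauto.
  - apply H2. exists t'. auto.
Qed.

Lemma choose_lambda b0 : exists l, ~ lt l b0 /\ ~ (ev (Some l) <-> ev None).
Proof.
  destruct (classic (ev (Some b0) <-> ev None)) as [H|H].
  - destruct (succ_top H) as [l Hl]. exists l. split.
    + intro h. apply (irr b0). eapply trn; [apply Hl|exact h].
    + rewrite (par_succT Hl). tauto.
  - exists b0. split; auto. apply irr.
Qed.

Lemma restrict_seg U x t l (V : seg lt l -> Cantor -> Prop) p :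
  is_inf lt U x (Some t) -> ~ lt l t -> (forall s, V s p <-> U (proj1_sig s) x) ->
  exists m', is_inf (@seglt T lt l) V p m' /\ hl m' = Some t.
Proof.
  intros [Hm1 Hm2] Hlt HV. destruct (tot t l) as [h|[h|h]]; [|subst l|contradiction].
  - exists (Some (exist _ t h)). split; auto. simpl. split.
    + apply HV. exact Hm1.
    + intros c hc. unfold seglt. simpl. apply Hm2. apply HV; auto.
  - exists None. split; auto. simpl. intros c hc. apply HV in hc.
    apply (Hm2 _ hc). exact (proj2_sig c).
Qed.

Definition Fc l (V : seg lt l -> Cantor -> Prop) (t : T) (p : Cantor) : Prop :=
  (~ (ev (Some l) <-> ev None) /\ ((exists s, proj1_sig s = t /\ V s p) \/ t = l)) \/
  ((ev (Some l) <-> ev None) /\ ((exists s, immpred lt (proj1_sig s) t /\ V s p) \/ immpred lt l t)).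

Lemma Fc_open l V : (forall s, open_set (V s)) -> forall t, open_set (@Fc l V t).
Proof.
  intros HV t p H.
  destruct H as [[A [(s & Hs & Hv)|E]]|[B [(s & Hs & Hv)|E]]].
  - destruct (HV s p Hv) as [n Hn]. exists n. intros y Hy. left. split; auto. left. exists s; auto.
  - exists 0. intros y _. left. auto.
  - destruct (HV s p Hv) as [n Hn]. exists n. intros y Hy. right. split; auto. left. exists s; auto.
  - exists 0. intros y _. right. auto.
Qed.

Lemma Fc_inf l V p m : is_inf (@seglt T lt l) V p m ->
  exists t, is_inf lt (@Fc l V) p (Some t) /\
   (~ (ev (Some t) <-> ev None) <->
    (par_even (ltopt (@seglt T lt l)) m <-> par_even (ltopt (@seglt T lt l)) None)).
Proof.
  intro Hm.
  destruct (classic (ev (Some l) <-> ev None)) as [B|A].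
  - destruct m as [s|]; simpl in Hm.
    + destruct (succ_of (proj2_sig s)) as [cs Hcs]. exists cs. split.
      * split.
        -- right. split; auto. left. exists s. split; auto. apply Hm.
        -- intros c [[Ac _]|[_ [(s' & Hs'c & Hs')|Hlc]]]; [contradiction| |].
           ++ apply (succ_mono Hcs Hs'c). exact (proj2 Hm s' Hs').
           ++ apply (succ_mono Hcs Hlc). intro h. apply (irr l). eapply trn; [exact h|exact (proj2_sig s)].
      * rewrite !(par_hl HW). simpl hl. rewrite (par_succT Hcs).
        destruct (classic (ev (Some (proj1_sig s)))), (classic (ev None)), (classic (ev (Some l))); tauto.
    + destruct (succ_top B) as [l' Hl']. exists l'. split.
      * split.
        -- right; split; auto.
        -- intros c [[Ac _]|[_ [(s' & _ & Hs')|Hlc]]]; [contradiction| |].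
           ++ exfalso; exact (Hm s' Hs').
           ++ apply (succ_mono Hl' Hlc). apply irr.
      * rewrite !(par_hl HW). simpl hl. rewrite (par_succT Hl').
        destruct (classic (ev None)), (classic (ev (Some l))); tauto.
  - exists (match m with Some s => proj1_sig s | None => l end). split.
    + destruct m as [s|]; simpl in Hm |- *.
      * split.
        -- left. split; auto. left. exists s; split; auto; apply Hm.
        -- intros c [[_ [(s' & <- & Hs')| ->]]|[Bc _]]; [| |contradiction].
           ++ exact (proj2 Hm s' Hs').
           ++ intro h. apply (irr l). eapply trn; [exact h|exact (proj2_sig s)].
      * split.
        -- left. auto.
        -- intros c [[_ [(s' & <- & Hs')| ->]]|[Bc _]]; [| |contradiction].
           ++ exfalso; exact (Hm s' Hs').
           ++ apply irr.
    + rewrite !(par_hl HW). destruct m as [s|]; simpl;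
      [destruct (classic (ev (Some (proj1_sig s))))|];
      destruct (classic (ev None)), (classic (ev (Some l))); try tauto.
Qed.
End WOT.


Lemma class4 (A B C : Prop) : (~ ~ (A <-> ~ C) <-> ~ (A <-> C)).
Proof. destruct (classic A), (classic C); tauto. Qed.

Lemma part1_fwd T (lt : T -> T -> Prop) (HW : WO lt) D :
  Dclass (ltopt lt) D -> Dgen (coclass (Dclass lt)) D.
Proof.
  intros (U & HU & HD). apply (Dgen_from HU).
  - intros x Hx. apply HD in Hx. destruct Hx as ([b|] & Hm & Hp).
    + exists b; apply Hm.
    + exfalso; apply Hp; tauto.
  - intros w [b Hb]. exists (fun p => ~ D (prepend w p)). split.
    + exists (fun t p => U (Some t) (prepend w p)). split.
      { intro t. apply open_restr, HU. }
      intro p. destruct (inf_exists HW (fun t p => U (Some t) (prepend w p)) p) as [m Hm].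
      assert (Hm2 : is_inf (ltopt lt) U (prepend w p) (Some m)).
      { destruct m as [t|]; simpl in *.
        - destruct Hm as [h1 h2]. split; auto. intros [c|] hc; simpl; auto.
        - split.
          + destruct b as [t|]; [exfalso; exact (Hm t (Hb p))| exact (Hb p)].
          + intros [c|] hc; simpl; [exfalso; exact (Hm c hc)|auto]. }
      rewrite (cond_at HW _ _ _ Hm). rewrite HD, (cond_at (WO_opt HW) _ _ _ Hm2).
      rewrite <- par_Some, (top_succ HW).
      destruct (classic (par_even (ltopt lt) m)), (classic (par_even (ltopt lt) None)); tauto.
    + intro p. split; intro h; [intro h'; auto | apply NNPP; auto].
Qed.

Lemma part1_bwd T (lt : T -> T -> Prop) (HW : WO lt) D :
  Dgen (coclass (Dclass lt)) D -> Dclass (ltopt lt) D.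
Proof.
  intros (I & v & U & HG & Hinc & HD).
  assert (Hch : forall i, exists V : T -> Cantor -> Prop, I i -> (forall t, open_set (V t)) /\
     forall p, U i p <-> ~ (exists m, is_inf lt V p m /\ ~ (par_even (ltopt lt) m <-> par_even (ltopt lt) None))).
  { intro i. destruct (classic (I i)) as [Hi|Hi].
    - destruct (HG i Hi) as (E & (V & HV & HE) & HUE). exists V. intros _. split; auto.
      intro p. rewrite HUE, HE. tauto.
    - exists (fun _ _ => False). intro; contradiction. }
  destruct (choice _ Hch) as [Vf HVf].
  set (F := fun i (o : option T) p => match o with Some t => Vf i t p | None => True end).
  destruct (Dgen_at I v U D Hinc HD) as [Hat Hout].
  exists (glue I v F). split.
  - apply glue_open. intros i [t|] Hi; simpl. apply (proj1 (HVf i Hi)). intros x _; exists 0; intros; simpl; trivial.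
  - intro x.
    destruct (classic (exists i p, I i /\ x = prepend (v i) p)) as [(i & p & Hi & ->)|Hn].
    + rewrite Hat by auto. destruct (HVf i Hi) as [HVo HVe]. rewrite HVe.
      destruct (inf_exists HW (Vf i) p) as [m Hm].
      assert (HmF : is_inf (ltopt lt) (F i) p (Some m)).
      { destruct m as [t|]; simpl in *.
        - destruct Hm as [h1 h2]. split; auto. intros [c|] hc; simpl; auto.
        - split; auto. intros [c|] hc; simpl; [exfalso; exact (Hm c hc)|auto]. }
      assert (HmG : is_inf (ltopt lt) (glue I v F) (prepend (v i) p) (Some m)).
      { apply (proj2 (is_inf_ext _ _ _ _ _ _ (fun t => glue_at I v Hinc F i p t Hi))). exact HmF. }
      rewrite (cond_at HW _ _ _ Hm), (cond_at (WO_opt HW) _ _ _ HmG).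
      rewrite <- par_Some, (top_succ HW).
      destruct (classic (par_even (ltopt lt) m)), (classic (par_even (ltopt lt) None)); tauto.
    + split; intro H.
      * exfalso; exact (Hout x Hn H).
      * destruct H as (m & Hm & Hp).
        assert (HN : is_inf (ltopt lt) (glue I v F) x None).
        { simpl. intros c hc. exact (glue_out Hn hc). }
        rewrite (inf_uniq (WO_opt HW) _ _ _ _ Hm HN) in Hp. tauto.
Qed.

Lemma part2_fwd T (lt : T -> T -> Prop) (HW : WO lt) D :
  Dclass lt D -> Dgen (coclass (fun S => exists l : T, Dclass (@seglt T lt l) S)) D.
Proof.
  intros (U & HU & HD). apply (Dgen_from HU).
  - intros x Hx. apply HD in Hx. destruct Hx as ([b|] & Hm & Hp).
    + exists b; apply Hm.
    + exfalso; apply Hp; tauto.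
  - intros w [b0 Hb0]. destruct (choose_lambda HW b0) as (l & Hlb & Hlp).
    exists (fun p => ~ D (prepend w p)). split.
    + exists l, (fun s p => U (proj1_sig s) (prepend w p)). split.
      { intro s. apply open_restr, HU. }
      intro p. destruct (inf_exists HW U (prepend w p)) as [[t|] Hm];
        [|exfalso; exact (Hm b0 (Hb0 p))].
      assert (Htl : ~ lt l t).
      { intro h. pose proof (proj2 Hm b0 (Hb0 p)) as h2.
        destruct (tot HW t b0) as [h3|[h3|h3]]; [| subst |contradiction].
        - apply Hlb. eapply trn; eauto.
        - contradiction. }
      destruct (restrict_seg HW (fun s p => U (proj1_sig s) (prepend w p)) p Hm Htl
                  (fun s => iff_refl _)) as (m' & Hm' & Hh).
      cbv beta. rewrite HD, (cond_at HW _ _ _ Hm), (cond_at (WO_seg l HW) _ _ _ Hm'), !(par_hl HW), Hh.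
      simpl hl.
      destruct (classic (par_even (ltopt lt) (Some t))), (classic (par_even (ltopt lt) None)),
        (classic (par_even (ltopt lt) (Some l))); tauto.
    + intro p. split; intro h; [intro h'; auto | apply NNPP; auto].
Qed.

Lemma part2_bwd T (lt : T -> T -> Prop) (HW : WO lt) (t0 : T) D :
  Dgen (coclass (fun S => exists l : T, Dclass (@seglt T lt l) S)) D -> Dclass lt D.
Proof.
  intros (I & v & U & HG & Hinc & HD).
  assert (Hch : forall i, exists lV : {l : T & seg lt l -> Cantor -> Prop}, I i ->
     (forall s, open_set (projT2 lV s)) /\
     forall p, U i p <-> ~ (exists m, is_inf (@seglt T lt (projT1 lV)) (projT2 lV) p m /\
        ~ (par_even (ltopt (@seglt T lt (projT1 lV))) m <-> par_even (ltopt (@seglt T lt (projT1 lV))) None))).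
  { intro i. destruct (classic (I i)) as [Hi|Hi].
    - destruct (HG i Hi) as (E & (l & V & HV & HE) & HUE). exists (existT _ l V). intros _. split; auto.
      intro p. simpl. rewrite HUE, HE. tauto.
    - exists (existT _ t0 (fun _ _ => False)). intro; contradiction. }
  destruct (choice _ Hch) as [f Hf].
  set (F := fun i t p => @Fc T lt (projT1 (f i)) (projT2 (f i)) t p).
  destruct (Dgen_at I v U D Hinc HD) as [Hat Hout].
  exists (glue I v F). split.
  - apply glue_open. intros i t Hi. apply Fc_open. apply (proj1 (Hf i Hi)).
  - intro x.
    destruct (classic (exists i p, I i /\ x = prepend (v i) p)) as [(i & p & Hi & ->)|Hn].
    + rewrite Hat by auto. destruct (Hf i Hi) as [HVo HVe]. rewrite HVe.
      destruct (inf_exists (WO_seg _ HW) (projT2 (f i)) p) as [m Hm].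
      destruct (Fc_inf HW (projT2 (f i)) p m Hm) as (t & Ht & Hpar).
      assert (HmG : is_inf lt (glue I v F) (prepend (v i) p) (Some t)).
      { apply (proj2 (is_inf_ext _ _ _ _ _ _ (fun t => glue_at I v Hinc F i p t Hi))). exact Ht. }
      rewrite (cond_at (WO_seg _ HW) _ _ _ Hm), (cond_at HW _ _ _ HmG).
      rewrite Hpar. tauto.
    + split; intro H.
      * exfalso; exact (Hout x Hn H).
      * destruct H as (m & Hm & Hp).
        assert (HN : is_inf lt (glue I v F) x None).
        { simpl. intros c hc. exact (glue_out Hn hc). }
        rewrite (inf_uniq HW _ _ _ _ Hm HN) in Hp. tauto.
Qed.


Unset Implicit Arguments.

Theorem lemma6 (T : Type) (lt : T -> T -> Prop) (Hwo : countable_wellorder lt) :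
  (* D_{alpha+1} = D(co D_alpha); alpha+1 is the order type of option T *)
  (forall D : Cantor -> Prop,
     Dclass (ltopt lt) D <-> Dgen (coclass (Dclass lt)) D) /\
  (* alpha >= 1: D_alpha = D(co (union_{lambda<alpha} D_lambda)) *)
  ((exists t : T, True) ->
   forall D : Cantor -> Prop,
     Dclass lt D <->
     Dgen (coclass (fun S => exists l : T, Dclass (@seglt T lt l) S)) D).
Proof.
  pose proof (WO_cw Hwo) as HW. split.
  - intro D. split; [apply part1_fwd | apply part1_bwd]; auto.
  - intros [t0 _] D. split; [apply part2_fwd | apply (part2_bwd HW t0)]; auto.
Qed.
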